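(* Let $u$ be a smooth function on $\overline\Omega$ such that $-\partial_{xx}u+L(u)+c(x)u\ge0$ in $\Omega$, where $c$ is a non-negative bounded smooth function. If there exists $x_0\in\partial\Omega$ such that $\min_{x\in\Omega}u(x)=u(x_0)<0$, then either $u$ is constant or $\partial_{\nu_x}u(x_0)<0$, where $\nu_x$ is the exterior normal.
   Context: $\Omega=\bigcup_{i=1}^m ]a_i,b_i[\subset\mathbb{R}$ with $a_1<b_1<\dots<a_m<b_m$; $K$ is a $C^1$ even function with $K>0$, $0<c_K<K<C_K$, $|K'|<C_K$; $L\phi(x)=\int_\Omega[\phi(x)-\phi(y)]K(x-y)dy$. *)

(* Defs.v *)
From Stdlib Require Import Reals.
From Coquelicot Require Import Coquelicot.
Open Scope R_scope.

Definition in_Omega (m : nat) (a b : nat -> R) (x : R) : Prop :=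
  exists i, (i < m)%nat /\ a i < x < b i.

Definition in_cl_Omega (m : nat) (a b : nat -> R) (x : R) : Prop :=
  exists i, (i < m)%nat /\ a i <= x <= b i.

Definition ordered_intervals (m : nat) (a b : nat -> R) : Prop :=
  (forall i, (i < m)%nat -> a i < b i) /\
  (forall i, (S i < m)%nat -> b i < a (S i)).

Definition smooth (f : R -> R) : Prop := forall n x, ex_derive_n f n x.

Definition smooth_on_cl_Omega (m : nat) (a b : nat -> R) (u : R -> R) : Prop :=
  forall i, (i < m)%nat ->
    exists v : R -> R, smooth v /\ forall x, a i <= x <= b i -> u x = v x.

Fixpoint int_Omega (n : nat) (a b : nat -> R) (g : R -> R) : R :=
  match n with
  | O => 0
  | S k => int_Omega k a b g + RInt g (a k) (b k)
  end.

Definition Lop (m : nat) (a b : nat -> R) (K : R -> R) (phi : R -> R) (x : R) : R :=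
  int_Omega m a b (fun y => (phi x - phi y) * K (x - y)).

(* exterior normal derivative at a boundary point x0 with exterior unit normal nu
   (nu = -1 at a_i, nu = +1 at b_i), computed from inside Omega:
   d_nu u(x0) = lim_{h -> 0+} (u x0 - u (x0 - h nu)) / h *)
Definition has_normal_deriv (u : R -> R) (x0 nu l : R) : Prop :=
  filterlim (fun h => (u x0 - u (x0 - h * nu)) / h) (at_right 0) (locally l).

(* Main.v *)
Require Import Defs.
From Stdlib Require Import Reals Lra Lia Classical.
From Coquelicot Require Import Coquelicot.
Open Scope R_scope.

Lemma smooth_cont v x : smooth v -> continuous v x.
Proof. intros Hv. apply (@ex_derive_continuous R_AbsRing R_NormedModule). exact (Hv 1%nat x). Qed.

Lemma smooth_cont2 v x : smooth v -> continuous (Derive_n v 2) x.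
Proof. intros Hv. apply (@ex_derive_continuous R_AbsRing R_NormedModule). exact (Hv 3%nat x). Qed.

Lemma taylor2 v x y : smooth v -> x < y -> exists z, x < z < y /\
  v y = v x + (y - x) * Derive v x + (y - x)^2 / 2 * Derive_n v 2 z.
Proof.
  intros Hv Hxy.
  destruct (Taylor_Lagrange v 1 x y Hxy) as [z [Hz E]].
  { intros; apply Hv. }
  exists z; split; [exact Hz|]. rewrite E. simpl.
  change (Derive (fun x => v x) x) with (Derive v x). field.
Qed.

Lemma smooth_refl v : smooth v -> smooth (fun s => v (-1 * s)).
Proof. intros Hv n x. apply ex_derive_n_comp_scal. apply filter_forall. intros; apply Hv. Qed.

Lemma taylor2_left v x y : smooth v -> y < x -> exists z, y < z < x /\
  v y = v x + (y - x) * Derive v x + (y - x)^2 / 2 * Derive_n v 2 z.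
Proof.
  intros Hv Hxy.
  destruct (taylor2 (fun s => v (-1 * s)) (-x) (-y) (smooth_refl v Hv)) as [z [Hz E]]; [lra|].
  exists (-z). split; [lra|].
  assert (D1 := Derive_n_comp_scal v (-1) 1 (-x)).
  assert (D2 := Derive_n_comp_scal v (-1) 2 z).
  simpl in D1. rewrite D1 in E; [| apply filter_forall; intros; apply Hv].
  rewrite D2 in E; [| apply filter_forall; intros; apply Hv].
  replace (-1 * - y) with y in E by ring. replace (-1 * - x) with x in E by ring.
  replace (-1 * z) with (-z) in E by ring.
  change (Derive (fun x => v x) x) with (Derive v x) in E.
  rewrite E. assert (HH : forall A B D : R, A + (-y - -x)*(-1*1*B) + (-y - -x)^2/2*((-1)^2*D) = A + (y-x)*B + (y-x)^2/2*D) by (intros; field). apply HH.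
Qed.

Lemma core v p q k C : smooth v -> p < q -> 0 <= C -> v p = k -> Derive v p <= 0 ->
  (forall x, p < x < q -> k < v x) ->
  (forall x, p < x < q -> Derive_n v 2 x <= C * (v x - k)) -> False.
Proof.
  intros Hv Hpq HC Hp Hd Hpos H2.
  set (t := Rmin ((q - p) / 2) (1 / (C + 1))).
  assert (Ht1 : 0 < t). { unfold t; apply Rmin_glb_lt; [lra|]. apply Rdiv_lt_0_compat; lra. }
  assert (Ht2 : t <= (q - p) / 2) by apply Rmin_l.
  assert (Ht3 : t * (C + 1) <= 1).
  { assert (t <= 1 / (C+1)) by apply Rmin_r.
    apply Rmult_le_compat_r with (r := C + 1) in H; [|lra].
    replace (1 / (C+1) * (C+1)) with 1 in H by (field; lra). exact H. }
  destruct (continuity_ab_maj v p (p + t)) as [s [Hs1 Hs2]]; [lra| |].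
  { intros c _. apply continuity_pt_filterlim. apply smooth_cont; exact Hv. }
  destruct (Req_dec s p) as [Es|Es].
  - assert (A := Hs1 (p + t/2) ltac:(lra)). assert (B := Hpos (p + t/2) ltac:(lra)).
    subst s; lra.
  - destruct (taylor2 v p s Hv) as [z [Hz E]]; [lra|].
    assert (Hz2 := H2 z ltac:(lra)).
    assert (Hzs := Hs1 z ltac:(lra)).
    assert (X := Hpos s ltac:(lra)).
    assert (Q : 0 <= (s - p)^2 * C <= 1).
    { split. apply Rmult_le_pos; [apply pow2_ge_0|lra].
      assert (0 < s - p <= t) by lra. assert (t <= 1) by nra.
      assert ((s-p)^2 <= t*t) by (simpl; nra). assert (t*t*C <= t*t*(C+1)) by nra. nra. }
    assert (E2 : v s - k <= (s - p)^2 / 2 * (C * (v s - k))).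
    { rewrite E, Hp. assert ((s - p) * Derive v p <= 0) by nra.
      assert (Derive_n v 2 z <= C * (v s - k)) by nra.
      assert (0 <= (s-p)^2 / 2) by (assert (0 <= (s-p)^2) by apply pow2_ge_0; lra).
      rewrite <- Hp. nra. }
    nra.
Qed.

Lemma int_le n a b g h :
  (forall k, (k < n)%nat -> a k <= b k /\ ex_RInt g (a k) (b k) /\ ex_RInt h (a k) (b k) /\
     (forall y, a k < y < b k -> g y <= h y)) ->
  int_Omega n a b g <= int_Omega n a b h.
Proof.
  induction n; intros H; simpl; [lra|].
  apply Rplus_le_compat.
  - apply IHn; intros k Hk; apply H; lia.
  - destruct (H n ltac:(lia)) as [H1 [H2 [H3 H4]]]. apply RInt_le; auto.
Qed.

Lemma int_const n a b B : int_Omega n a b (fun _ => B) = B * int_Omega n a b (fun _ => 1).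
Proof.
  induction n; simpl; [ring|]. rewrite IHn, !RInt_const. unfold scal; simpl; unfold mult; simpl. ring.
Qed.

Lemma int_zero_parts n a b g :
  (forall k, (k < n)%nat -> RInt g (a k) (b k) <= 0) ->
  int_Omega n a b g <= 0 /\
  (0 <= int_Omega n a b g -> forall k, (k < n)%nat -> RInt g (a k) (b k) = 0).
Proof.
  induction n; intros H; simpl.
  - split; [lra|]. intros _ k Hk; lia.
  - destruct IHn as [A B]. { intros k Hk; apply H; lia. }
    assert (C := H n ltac:(lia)). split; [lra|].
    intros Hs k Hk. destruct (Nat.eq_dec k n) as [->|Hne]; [lra|].
    apply B; [lra|lia].
Qed.

Lemma lim_right G L :
  (forall eps, 0 < eps -> exists d, 0 < d /\ forall h, 0 < h < d -> Rabs (G h - L) < eps) ->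
  filterlim G (at_right 0) (locally L).
Proof.
  intros H. apply filterlim_locally. intros eps.
  destruct (H eps (cond_pos eps)) as [d [Hd Hh]].
  exists (mkposreal d Hd). intros y Hy Hy0. apply Hh. split; [exact Hy0|].
  change (Rabs (y - 0) < d) in Hy. rewrite Rminus_0_r in Hy. apply Rabs_lt_between in Hy. lra.
Qed.

Lemma loc_eq (u v : R -> R) p q x : p < x < q -> (forall t, p <= t <= q -> u t = v t) ->
  locally x (fun t => u t = v t).
Proof.
  intros Hx H. assert (Hd : 0 < Rmin (x - p) (q - x)) by (apply Rmin_glb_lt; lra).
  exists (mkposreal _ Hd). intros t Ht. change (Rabs (t - x) < Rmin (x - p) (q - x)) in Ht.
  apply H. assert (Rmin (x - p) (q - x) <= x - p) by apply Rmin_l.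
  assert (Rmin (x - p) (q - x) <= q - x) by apply Rmin_r.
  apply Rabs_lt_between in Ht. lra.
Qed.

Lemma zero_int (h : R -> R) a b : a < b -> (forall y, continuous h y) ->
  (forall y, a < y < b -> h y <= 0) -> RInt h a b = 0 ->
  forall y, a <= y <= b -> h y = 0.
Proof.
  intros Hab Hc Hle H0 y0 Hy0.
  destruct (Req_dec (h y0) 0) as [E|Hne]; [exact E|exfalso].
  assert (He : 0 < Rabs (h y0) / 2) by (apply Rabs_pos_lt in Hne; lra).
  destruct (proj1 (filterlim_locally h (h y0)) (Hc y0) (mkposreal _ He)) as [dl Hdl].
  set (d := dl / 2).
  assert (Hd : 0 < d) by (unfold d; destruct dl; simpl; lra).
  set (p := Rmax a (y0 - d)). set (q := Rmin b (y0 + d)).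
  assert (Hp1 : a <= p) by apply Rmax_l.
  assert (Hq1 : q <= b) by apply Rmin_l.
  assert (Hp2 : y0 - d <= p) by apply Rmax_r.
  assert (Hq2 : q <= y0 + d) by apply Rmin_r.
  assert (Hpq : p < q).
  { unfold p, q, Rmax, Rmin. destruct (Rle_dec a (y0 - d)); destruct (Rle_dec b (y0 + d)); lra. }
  assert (Hp3 : p <= y0) by (unfold p, Rmax; destruct (Rle_dec a (y0 - d)); lra).
  assert (Hq3 : y0 <= q) by (unfold q, Rmin; destruct (Rle_dec b (y0 + d)); lra).
  assert (Hnear : forall x, p <= x <= q -> Rabs (h x - h y0) < Rabs (h y0) / 2).
  { intros x Hx. assert (Hb : ball y0 dl x).
    { change (Rabs (x - y0) < dl).
      apply Rabs_lt_between. unfold d in *. destruct dl; simpl in *. lra. }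
    exact (Hdl x Hb). }
  assert (Hex : forall s t, ex_RInt h s t) by (intros; apply (@ex_RInt_continuous R_CompleteNormedModule); intros; apply Hc).
  destruct (Rlt_dec 0 (h y0)) as [Hpos|Hneg].
  - assert (A := Hnear ((p + q) / 2) ltac:(lra)).
    assert (B := Hle ((p + q) / 2) ltac:(lra)).
    rewrite (Rabs_pos_eq (h y0)) in A by lra. apply Rabs_lt_between in A. lra.
  - assert (Hn : h y0 < 0) by lra.
    rewrite Rabs_left in Hnear by lra.
    rewrite <- (RInt_Chasles h a p b) in H0 by auto.
    rewrite <- (RInt_Chasles h p q b) in H0 by auto.
    unfold plus in H0; simpl in H0.
    assert (I1 : RInt h a p <= RInt (fun _ => 0) a p).
    { apply RInt_le; auto. apply ex_RInt_const. intros x Hx; apply Hle; lra. }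
    assert (I2 : RInt h q b <= RInt (fun _ => 0) q b).
    { apply RInt_le; auto. apply ex_RInt_const. intros x Hx; apply Hle; lra. }
    assert (I3 : RInt h p q <= RInt (fun _ => h y0 / 2) p q).
    { apply RInt_le; auto. lra. apply ex_RInt_const. intros x Hx.
      assert (A := Hnear x ltac:(lra)). apply Rabs_lt_between in A. lra. }
    rewrite !RInt_const in I1, I2, I3. unfold scal in *; simpl in *; unfold mult in *; simpl in *.
    assert ((q - p) * (h y0 / 2) < 0) by nra.
    lra.
Qed.

Lemma second_deriv_min v p q x : smooth v -> p < x < q ->
  (forall y, p < y < q -> v x <= v y) -> 0 <= Derive_n v 2 x.
Proof.
  intros Hv Hx Hmin. apply Rnot_lt_le. intros Hn.
  assert (He : 0 < Rabs (Derive_n v 2 x) / 2) by (rewrite Rabs_left by lra; lra).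
  destruct (proj1 (filterlim_locally _ _) (smooth_cont2 v x Hv) (mkposreal _ He)) as [dl Hdl].
  assert (Hneg : forall y, Rabs (y - x) < dl -> Derive_n v 2 y < 0).
  { intros y Hy. assert (Hb : ball x dl y) by exact Hy.
    assert (A := Hdl y Hb). change (Rabs (Derive_n v 2 y - Derive_n v 2 x) < Rabs (Derive_n v 2 x) / 2) in A.
    rewrite (Rabs_left (Derive_n v 2 x)) in A by lra. apply Rabs_lt_between in A. lra. }
  set (h := Rmin (dl / 2) (Rmin ((x - p) / 2) ((q - x) / 2))).
  assert (Hh1 : h <= dl / 2) by apply Rmin_l.
  assert (Hh2 : h <= (x - p) / 2) by (unfold h; eapply Rle_trans; [apply Rmin_r|apply Rmin_l]).
  assert (Hh3 : h <= (q - x) / 2) by (unfold h; eapply Rle_trans; [apply Rmin_r|apply Rmin_r]).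
  assert (Hh0 : 0 < h).
  { unfold h. destruct dl as [dl Hdl0]; simpl. repeat apply Rmin_glb_lt; lra. }
  destruct (taylor2 v x (x + h) Hv) as [z1 [Hz1 E1]]; [lra|].
  destruct (taylor2_left v x (x - h) Hv) as [z2 [Hz2 E2]]; [lra|].
  assert (N1 : Derive_n v 2 z1 < 0).
  { apply Hneg. apply Rabs_lt_between. destruct dl; simpl in *; lra. }
  assert (N2 : Derive_n v 2 z2 < 0).
  { apply Hneg. apply Rabs_lt_between. destruct dl; simpl in *; lra. }
  assert (M1 := Hmin (x + h) ltac:(lra)). assert (M2 := Hmin (x - h) ltac:(lra)).
  replace (x + h - x) with h in E1 by ring. replace (x - h - x) with (- h) in E2 by ring.
  replace ((- h)^2) with (h^2) in E2 by ring.
  assert (0 < h ^ 2 / 2) by (simpl; nra).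
  assert (h^2/2 * Derive_n v 2 z1 < 0) by nra.
  assert (h^2/2 * Derive_n v 2 z2 < 0) by nra.
  lra.
Qed.

Theorem lemma4 (m : nat) (a b : nat -> R) (K c u : R -> R) (cK CK : R)
  (x0 nu : R) (i0 : nat) :
  (1 <= m)%nat ->
  ordered_intervals m a b ->
  0 < cK ->
  (forall z, ex_derive K z /\ continuous (Derive K) z) ->
  (forall z, K (- z) = K z) ->
  (forall z, 0 < K z) ->
  (forall z, cK < K z < CK) ->
  (forall z, Rabs (Derive K z) < CK) ->
  (forall x, in_Omega m a b x -> forall n, ex_derive_n c n x) ->
  (forall x, in_Omega m a b x -> 0 <= c x) ->
  (exists M, forall x, in_Omega m a b x -> Rabs (c x) <= M) ->
  smooth_on_cl_Omega m a b u ->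
  (forall x, in_Omega m a b x ->
     - Derive_n u 2 x + Lop m a b K u x + c x * u x >= 0) ->
  (i0 < m)%nat ->
  ((x0 = a i0 /\ nu = -1) \/ (x0 = b i0 /\ nu = 1)) ->
  (forall x, in_Omega m a b x -> u x0 <= u x) ->
  u x0 < 0 ->
  (forall x, in_cl_Omega m a b x -> u x = u x0) \/
  (exists l, has_normal_deriv u x0 nu l /\ l < 0).
Proof.
  intros Hm Hord HcK HK Heven Hpos HKb HKd Hc Hc0 [M HM] Hsm Hsup Hi0 Hx0 Hmin Hneg.
  destruct Hord as [Hab Hba].
  assert (HCK : 0 < CK) by (specialize (HKb 0); lra).
  assert (HKc : forall z, continuous K z).
  { intro z. apply (@ex_derive_continuous R_AbsRing R_NormedModule). apply HK. }
  assert (Hint : forall (x A : R) (v : R -> R), smooth v -> forall y,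
             continuous (fun y => (A - v y) * K (x - y)) y).
  { intros x A v Hv y.
    apply (continuous_mult (fun y => A - v y) (fun y => K (x - y))).
    - apply (continuous_minus (fun _ => A) v). apply continuous_const. apply smooth_cont; exact Hv.
    - apply (continuous_comp (fun y => x - y) K).
      + apply (continuous_minus (fun _ => x) (fun y => y)). apply continuous_const. apply continuous_id.
      + apply HKc. }
  assert (exR : forall x k, (k < m)%nat ->
            ex_RInt (fun y => (u x - u y) * K (x - y)) (a k) (b k)).
  { intros x k Hk. destruct (Hsm k Hk) as [v [Hv Huv]].
    assert (Hk' := Hab k Hk).
    apply (ex_RInt_ext (fun y => (u x - v y) * K (x - y))).
    { intros y Hy. rewrite Rmin_left, Rmax_right in Hy by lra. rewrite (Huv y) by lra. reflexivity. }
    apply (@ex_RInt_continuous R_CompleteNormedModule). intros; apply Hint; exact Hv. }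
  set (Sm := int_Omega m a b (fun _ => 1)).
  assert (HSm : 0 <= Sm).
  { assert (A : int_Omega m a b (fun _ => 0) <= Sm).
    { apply int_le. intros k Hk. assert (Hk' := Hab k Hk).
      split; [lra|split; [apply ex_RInt_const|split; [apply ex_RInt_const|intros; lra]]]. }
    rewrite int_const in A. fold Sm in A. lra. }
  assert (HinO : forall x, a i0 < x < b i0 -> in_Omega m a b x).
  { intros x Hx. exists i0. split; assumption. }
  assert (HM0 : 0 <= M).
  { assert (Hi := Hab i0 Hi0).
    assert (A := HM ((a i0 + b i0) / 2) (HinO ((a i0 + b i0) / 2) ltac:(lra))).
    assert (B := Rabs_pos (c ((a i0 + b i0) / 2))). lra. }
  destruct (classic (exists x1, in_Omega m a b x1 /\ u x1 = u x0)) as [[x1 [Hx1 E1]]|Hno].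
  - left.
    destruct Hx1 as [i1 [Hi1 Hx1]].
    destruct (Hsm i1 Hi1) as [v1 [Hv1 Huv1]].
    assert (D2 : 0 <= Derive_n v1 2 x1).
    { apply (second_deriv_min v1 (a i1) (b i1) x1 Hv1 Hx1).
      intros y Hy. rewrite <- !Huv1 by lra. rewrite E1. apply Hmin. exists i1; auto. }
    assert (D2' : Derive_n u 2 x1 = Derive_n v1 2 x1).
    { apply Derive_n_ext_loc. apply (loc_eq u v1 (a i1) (b i1)); auto. }
    assert (S := Hsup x1 (ex_intro _ i1 (conj Hi1 Hx1))).
    assert (Hcu : c x1 * u x1 <= 0).
    { assert (0 <= c x1) by (apply Hc0; exists i1; auto). rewrite E1. nra. }
    assert (HL : 0 <= int_Omega m a b (fun y => (u x1 - u y) * K (x1 - y))).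
    { unfold Lop in S. lra. }
    assert (Hle : forall k, (k < m)%nat -> RInt (fun y => (u x1 - u y) * K (x1 - y)) (a k) (b k) <= 0).
    { intros k Hk. assert (Hk' := Hab k Hk).
      assert (A : RInt (fun y => (u x1 - u y) * K (x1 - y)) (a k) (b k) <= RInt (fun _ => 0) (a k) (b k)).
      { apply RInt_le; [lra| apply exR; auto | apply ex_RInt_const |].
        intros y Hy. assert (B := Hmin y (ex_intro _ k (conj Hk Hy))).
        assert (C := Hpos (x1 - y)). rewrite E1. nra. }
      rewrite RInt_const in A. unfold scal in A; simpl in A; unfold mult in A; simpl in A. lra. }
    destruct (int_zero_parts m a b _ Hle) as [_ Z].
    specialize (Z HL).
    intros y [k [Hk Hy]].
    destruct (Hsm k Hk) as [v [Hv Huv]].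
    assert (Hk' := Hab k Hk).
    assert (Z0 := zero_int (fun y => (u x0 - v y) * K (x1 - y)) (a k) (b k) Hk' (Hint x1 (u x0) v Hv)).
    assert (W : (u x0 - v y) * K (x1 - y) = 0).
    { apply Z0; auto.
      - intros z Hz. assert (B := Hmin z (ex_intro _ k (conj Hk Hz))).
        assert (C := Hpos (x1 - z)). rewrite <- Huv by lra. nra.
      - rewrite <- (Z k Hk). apply RInt_ext. intros z Hz.
        rewrite Rmin_left, Rmax_right in Hz by lra. rewrite (Huv z) by lra. rewrite E1. reflexivity. }
    apply Rmult_integral in W. destruct W as [W|W].
    + rewrite (Huv y) by lra. lra.
    + specialize (Hpos (x1 - y)). lra.
  - right.
    assert (Hst : forall x, in_Omega m a b x -> u x0 < u x).
    { intros x Hx. destruct (Rle_lt_or_eq_dec _ _ (Hmin x Hx)) as [H|H]; [exact H|].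
      exfalso. apply Hno. exists x. auto. }
    destruct (Hsm i0 Hi0) as [v [Hv Huv]].
    set (p := a i0). set (q := b i0). change (forall x, p <= x <= q -> u x = v x) in Huv.
    assert (Hpq : p < q) by (apply Hab; exact Hi0).
    set (C := CK * Sm + M).
    assert (HC : 0 <= C) by (unfold C; nra).
    assert (Key : forall x, p < x < q -> Derive_n v 2 x <= C * (v x - u x0)).
    { intros x Hx. assert (Hx' := HinO x Hx).
      assert (D : Derive_n u 2 x = Derive_n v 2 x).
      { apply Derive_n_ext_loc. apply (loc_eq u v p q); auto. }
      assert (S := Hsup x Hx').
      assert (L : Lop m a b K u x <= CK * (u x - u x0) * Sm).
      { unfold Lop. unfold Sm. rewrite <- int_const. apply int_le.
        intros k Hk. assert (Hk' := Hab k Hk). split; [lra|split; [apply exR; auto|split; [apply ex_RInt_const|]]].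
        intros y Hy. assert (B := Hmin y (ex_intro _ k (conj Hk Hy))).
        assert (KK := HKb (x - y)). assert (KP := Hpos (x - y)).
        assert (Bx := Hmin x Hx').
        destruct (Rle_dec 0 (u x - u y)).
        - assert ((u x - u y) * K (x - y) <= (u x - u y) * CK) by (apply Rmult_le_compat_l; lra).
          assert ((u x - u y) * CK <= (u x - u x0) * CK) by (apply Rmult_le_compat_r; lra).
          lra.
        - assert ((u x - u y) * K (x - y) <= 0) by nra.
          assert (0 <= CK * (u x - u x0)) by nra. lra. }
      assert (Cu : c x * u x <= M * (u x - u x0)).
      { assert (c0 := Hc0 x Hx'). assert (cM := HM x Hx'). rewrite Rabs_pos_eq in cM by lra.
        assert (U := Hst x Hx'). nra. }
      rewrite <- (Huv x) by lra. unfold C. assert (E : (CK * Sm + M) * (u x - u x0) = CK * (u x - u x0) * Sm + M * (u x - u x0)) by ring. rewrite E. lra. }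
    assert (Hup : u p = v p) by (apply Huv; lra).
    assert (Huq : u q = v q) by (apply Huv; lra).
    assert (Hdv : forall y, derivable_pt_lim v y (Derive v y)).
    { intro y. apply is_derive_Reals. apply Derive_correct. exact (Hv 1%nat y). }
    destruct Hx0 as [[Ex En]|[Ex En]].
    + assert (Hd : 0 < Derive v p).
      { apply Rnot_le_lt. intro Hd. apply (core v p q (u x0) C Hv Hpq HC); auto.
        - rewrite <- Hup. unfold p; rewrite Ex; reflexivity.
        - intros x Hx. rewrite <- Huv by lra. apply Hst. apply HinO. exact Hx. }
      exists (- Derive v p). split; [|lra].
      unfold has_normal_deriv. apply lim_right. intros eps Heps.
      destruct (Hdv p eps Heps) as [dl Hdl].
      exists (Rmin dl (q - p)). split.
      { apply Rmin_glb_lt; [apply cond_pos|lra]. }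
      intros h Hh. assert (h1 : h < dl) by (eapply Rlt_le_trans; [apply Hh|apply Rmin_l]).
      assert (h2 : h < q - p) by (eapply Rlt_le_trans; [apply Hh|apply Rmin_r]).
      rewrite Ex, En. fold p. replace (p - h * -1) with (p + h) by ring.
      rewrite Hup, (Huv (p + h)) by (unfold p, q in *; lra).
      replace ((v p - v (p + h)) / h - - Derive v p) with (- ((v (p + h) - v p) / h - Derive v p))
        by (field; lra).
      rewrite Rabs_Ropp. apply Hdl; [lra|]. rewrite Rabs_pos_eq; lra.
    + set (vr := fun s => v (-1 * s)).
      assert (Hvr : smooth vr) by (apply smooth_refl; exact Hv).
      assert (Hd : Derive v q < 0).
      { apply Rnot_le_lt. intro Hd. apply (core vr (-q) (-p) (u x0) C Hvr ltac:(lra) HC).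
        - unfold vr. replace (-1 * - q) with q by ring. rewrite <- Huq. unfold q; rewrite Ex; reflexivity.
        - assert (D1 := Derive_n_comp_scal v (-1) 1 (-q)). simpl in D1.
          unfold vr. rewrite D1; [| apply filter_forall; intros; apply Hv].
          replace (-1 * - q) with q by ring. change (Derive (fun x => v x) q) with (Derive v q). lra.
        - intros x Hx. unfold vr. rewrite <- Huv by lra. apply Hst. apply HinO. unfold p, q in *. lra.
        - intros x Hx. assert (D2 := Derive_n_comp_scal v (-1) 2 x).
          unfold vr. rewrite D2; [| apply filter_forall; intros; apply Hv].
          assert (Kx := Key (-1 * x) ltac:(lra)). replace ((-1)^2) with 1 by ring. lra. }
      exists (Derive v q). split; [|lra].
      unfold has_normal_deriv. apply lim_right. intros eps Heps.
      destruct (Hdv q eps Heps) as [dl Hdl].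
      exists (Rmin dl (q - p)). split.
      { apply Rmin_glb_lt; [apply cond_pos|lra]. }
      intros h Hh. assert (h1 : h < dl) by (eapply Rlt_le_trans; [apply Hh|apply Rmin_l]).
      assert (h2 : h < q - p) by (eapply Rlt_le_trans; [apply Hh|apply Rmin_r]).
      rewrite Ex, En. fold q. replace (q - h * 1) with (q + - h) by ring.
      rewrite Huq, (Huv (q + - h)) by (unfold p, q in *; lra).
      replace ((v q - v (q + - h)) / h) with ((v (q + - h) - v q) / - h) by (field; lra).
      apply Hdl; [lra|]. rewrite Rabs_Ropp, Rabs_pos_eq; lra.
Qed.
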